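(* For every set $\Gamma$ of triples about atomic actions, every test $b$, program $C$ and $P\subseteq\Sigma$: if $\Gamma\vdash\{\mathbf 1(P\wedge b)\}\ C\ \{\Box P\}$, then $\Gamma\vdash\{\mathbf 1P\}\ \mathsf{while}\ b\ \mathsf{do}\ C\ \{\Box(P\wedge\neg b)\}$.
   Context: Partial semiring $\mathcal A=\langle U,+,\cdot,\mathbf 0,\mathbf 1\rangle$ ($+$ commutative, associative, possibly partial, unit $\mathbf 0$; $\cdot$ total, associative, unit $\mathbf 1$; two-sided distributivity; $\mathbf 0$ annihilates), naturally ordered, Scott continuous, with a top element; infinite sums are suprema of finite partial sums. $\mathcal W(\Sigma)$: maps $m:\Sigma\to U$ with countable support $\mathrm{supp}(m)=\{\sigma:m(\sigma)\ne\mathbf 0\}$ and defined mass $|m|=\sum_{\sigma\in\mathrm{supp}(m)}m(\sigma)$; operations pointwise. $\eta(\sigma)$ is $\mathbf 1$ at $\sigma$ and $\mathbf 0$ elsewhere; $f^\dagger(m)(\tau)=\sum_{\sigma\in\mathrm{supp}(m)}m(\sigma)\cdot f(\sigma)(\tau)$. Programs over states $\Sigma$: $C::=\mathsf{skip}\mid C_1;C_2\mid C_1+C_2\mid\mathsf{assume}\ e\mid C^{\langle e,e'\rangle}\mid a$ with atomic actions $a$, $e$ a test $b$ (Boolean combination of $\mathsf{true},\mathsf{false}$ and primitive tests $t\subseteq\Sigma$, $[\![b]\!](\sigma)=\mathbf 1$ iff true, else $\mathbf 0$) or a weight $u\in U$; semantics $[\![\mathsf{skip}]\!](\sigma)=\eta(\sigma)$,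 $[\![C_1;C_2]\!](\sigma)=[\![C_2]\!]^\dagger([\![C_1]\!](\sigma))$, $[\![C_1+C_2]\!](\sigma)=[\![C_1]\!](\sigma)+[\![C_2]\!](\sigma)$, $[\![\mathsf{assume}\ e]\!](\sigma)=[\![e]\!](\sigma)\cdot\eta(\sigma)$, $[\![C^{\langle e,e'\rangle}]\!]$ the least fixed point of $\Phi(f)(\sigma)=[\![e]\!](\sigma)\cdot f^\dagger([\![C]\!](\sigma))+[\![e']\!](\sigma)\cdot\eta(\sigma)$. $\mathsf{while}\ b\ \mathsf{do}\ C$ abbreviates $C^{\langle b,\neg b\rangle}$. For $P\subseteq\Sigma$ and a test $b$, $P\wedge b=\{\sigma\in P:[\![b]\!](\sigma)=\mathbf 1\}$ and $P\wedge\neg b=\{\sigma\in P:[\![b]\!](\sigma)=\mathbf 0\}$. Assertions are subsets of $\mathcal W(\Sigma)$; $\bigoplus_{x\in T}\phi(x)=\{\sum_{t\in T}m_t:m_t\in\phi(t)\ \forall t\}$, $\varphi\oplus\psi$ the binary case, $u\odot\varphi=\{u\cdot m:m\in\varphi\}$, $\varphi\odot u=\{m\cdot u:m\in\varphi\}$; $\mathbf 1P=\{m:|m|=\mathbf 1,\mathrm{supp}(m)\subseteq P\}$; $\Box P=\{m:\mathrm{supp}(m)\subseteq P\}$. $\Gamma\vdash\{\varphi\}C\{\psi\}$ means derivable from axioms in $\Gamma$ using: (Skip) $\{\varphi\}\mathsf{skip}\{\varphi\}$; (Seq) $\{\varphi\}C_1\{\vartheta\},\{\vartheta\}C_2\{\psi\}\Rightarrow\{\varphi\}C_1;C_2\{\psi\}$;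 (Plus) $\{\varphi\}C_1\{\psi_1\},\{\varphi\}C_2\{\psi_2\}\Rightarrow\{\varphi\}C_1+C_2\{\psi_1\oplus\psi_2\}$; (Assume) if $[\![e]\!](\sigma)=u$ for all $m\in\varphi,\sigma\in\mathrm{supp}(m)$ then $\{\varphi\}\mathsf{assume}\ e\{\varphi\odot u\}$; (Iter) if $(\psi_n)$ converges to $\psi_\infty$ (whenever $m_n\in\psi_n$ for all $n$, $\sum_n m_n\in\psi_\infty$) and for all $n$, $\{\varphi_n\}\mathsf{assume}\ e;C\{\varphi_{n+1}\}$ and $\{\varphi_n\}\mathsf{assume}\ e'\{\psi_n\}$, then $\{\varphi_0\}C^{\langle e,e'\rangle}\{\psi_\infty\}$; (False) $\{\emptyset\}C\{\varphi\}$; (True) $\{\varphi\}C\{\mathcal W(\Sigma)\}$; (Scale) $\{\varphi\}C\{\psi\}\Rightarrow\{u\odot\varphi\}C\{u\odot\psi\}$; (Disj), (Conj): from two triples infer the triple with $\cup$, resp. $\cap$, of pre- and postconditions; (Choice) $\forall t\in T.\{\phi(t)\}C\{\phi'(t)\}\Rightarrow\{\bigoplus_{x\in T}\phi(x)\}C\{\bigoplus_{x\in T}\phi'(x)\}$; (Exists) same premises $\Rightarrow\{\bigcup_t\phi(t)\}C\{\bigcup_t\phi'(t)\}$; (Consequence) $\varphi'\subseteq\varphi$, $\{\varphi\}C\{\psi\}$, $\psi\subseteq\psi'\Rightarrow\{\varphi'\}C\{\psi'\}$. *)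

(* Defs.v *)
From Stdlib Require Import List ClassicalEpsilon.
Import ListNotations.

Set Implicit Arguments.

Record psr_ops := {
  car   : Type;
  padd  : car -> car -> option car;
  pmul  : car -> car -> car;
  pzero : car;
  pone  : car }.

Definition obind {X Y : Type} (o : option X) (f : X -> option Y) : option Y :=
  match o with Some x => f x | None => None end.

Section Order.
Variable S : psr_ops.

Definition ple (a b : car S) : Prop := exists c, padd S a c = Some b.

Definition is_lub (D : car S -> Prop) (s : car S) : Prop :=
  (forall d, D d -> ple d s) /\ (forall u, (forall d, D d -> ple d u) -> ple s u).

Definition directed (D : car S -> Prop) : Prop :=
  (exists d, D d) /\
  (forall x y, D x -> D y -> exists z, D z /\ ple x z /\ ple y z).
End Order.

Record psr_axioms (S : psr_ops) : Prop := {
  padd_comm  : forall a b, padd S a b = padd S b a;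
  padd_assoc : forall a b c,
      obind (padd S a b) (fun x => padd S x c) =
      obind (padd S b c) (fun y => padd S a y);
  padd_0l    : forall a, padd S (pzero S) a = Some a;
  pmul_assoc : forall a b c, pmul S a (pmul S b c) = pmul S (pmul S a b) c;
  pmul_1l    : forall a, pmul S (pone S) a = a;
  pmul_1r    : forall a, pmul S a (pone S) = a;
  pdistr_l   : forall a b c d, padd S b c = Some d ->
      padd S (pmul S a b) (pmul S a c) = Some (pmul S a d);
  pdistr_r   : forall a b c d, padd S b c = Some d ->
      padd S (pmul S b a) (pmul S c a) = Some (pmul S d a);
  pmul_0l    : forall a, pmul S (pzero S) a = pzero S;
  pmul_0r    : forall a, pmul S a (pzero S) = pzero S;
  ple_antisym : forall a b, ple S a b -> ple S b a -> a = b;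
  dir_sup    : forall D, directed S D -> exists s, is_lub S D s;
  mul_cont_l : forall D s a, directed S D -> is_lub S D s ->
      is_lub S (fun x => exists d, D d /\ x = pmul S a d) (pmul S a s);
  mul_cont_r : forall D s a, directed S D -> is_lub S D s ->
      is_lub S (fun x => exists d, D d /\ x = pmul S d a) (pmul S s a);
  add_cont   : forall D s a, directed S D -> is_lub S D s ->
      (forall d, D d -> exists x, padd S a d = Some x) ->
      exists t, padd S a s = Some t /\
        is_lub S (fun x => exists d, D d /\ padd S a d = Some x) t;
  has_top    : exists t, forall a, ple S a t }.

Section Sums.
Variable S : psr_ops.

Fixpoint fsum {I : Type} (f : I -> car S) (l : list I) : option (car S) :=
  match l with
  | [] => Some (pzero S)
  | i :: l' => obind (fsum f l') (fun v => padd S (f i) v)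
  end.

Definition is_sum {I : Type} (f : I -> car S) (s : car S) : Prop :=
  (forall l, NoDup l -> fsum f l <> None) /\
  is_lub S (fun v => exists l, NoDup l /\ fsum f l = Some v) s.
End Sums.

Section Weights.
Variable S : psr_ops.
Variable Sigma : Type.

Definition supp_t (m : Sigma -> car S) := { s : Sigma | m s <> pzero S }.

Definition countable_supp (m : Sigma -> car S) : Prop :=
  exists g : supp_t m -> nat, forall x y, g x = g y -> x = y.

Definition mass_is (m : Sigma -> car S) (u : car S) : Prop :=
  is_sum S (fun x : supp_t m => m (proj1_sig x)) u.

Definition isW (m : Sigma -> car S) : Prop :=
  countable_supp m /\ exists u, mass_is m u.

Definition W := { m : Sigma -> car S | isW m }.

Definition wf (m : W) : Sigma -> car S := proj1_sig m.

Definition assertion := W -> Prop.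

Definition wsum {T : Type} (f : T -> W) (s : W) : Prop :=
  forall sg, is_sum S (fun t => wf (f t) sg) (wf s sg).

Definition bigoplus {T : Type} (phi : T -> assertion) : assertion :=
  fun s => exists f : T -> W, (forall t, phi t (f t)) /\ wsum f s.

Definition oplus (phi psi : assertion) : assertion :=
  fun s => exists m1 m2, phi m1 /\ psi m2 /\
    forall sg, padd S (wf m1 sg) (wf m2 sg) = Some (wf s sg).

Definition smul_l (u : car S) (phi : assertion) : assertion :=
  fun s => exists m, phi m /\ forall sg, wf s sg = pmul S u (wf m sg).
Definition smul_r (phi : assertion) (u : car S) : assertion :=
  fun s => exists m, phi m /\ forall sg, wf s sg = pmul S (wf m sg) u.

Definition OneA (P : Sigma -> Prop) : assertion :=
  fun m => mass_is (wf m) (pone S) /\ forall sg, wf m sg <> pzero S -> P sg.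
Definition BoxA (P : Sigma -> Prop) : assertion :=
  fun m => forall sg, wf m sg <> pzero S -> P sg.

Definition WAll : assertion := fun _ => True.
Definition AFalse : assertion := fun _ => False.
Definition subA (phi psi : assertion) : Prop := forall m, phi m -> psi m.
Definition unionA (phi psi : assertion) : assertion := fun m => phi m \/ psi m.
Definition interA (phi psi : assertion) : assertion := fun m => phi m /\ psi m.
Definition bigunion {T : Type} (phi : T -> assertion) : assertion :=
  fun m => exists t, phi t m.

Definition converges (psi : nat -> assertion) (psiinf : assertion) : Prop :=
  forall (m : nat -> W) (s : W), (forall n, psi n (m n)) -> wsum m s -> psiinf s.
End Weights.

Inductive test (Sigma : Type) : Type :=
| TTrue | TFalse
| TPrim (t : Sigma -> Prop)
| TNot (b : test Sigma)
| TAnd (b1 b2 : test Sigma)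
| TOr  (b1 b2 : test Sigma).
Arguments TTrue {Sigma}. Arguments TFalse {Sigma}.

Fixpoint tholds {Sigma : Type} (b : test Sigma) (s : Sigma) : Prop :=
  match b with
  | TTrue => True
  | TFalse => False
  | TPrim t => t s
  | TNot b => ~ tholds b s
  | TAnd b1 b2 => tholds b1 s /\ tholds b2 s
  | TOr b1 b2 => tholds b1 s \/ tholds b2 s
  end.

Definition tsem (S : psr_ops) {Sigma : Type} (b : test Sigma) (s : Sigma) : car S :=
  if excluded_middle_informative (tholds b s) then pone S else pzero S.

Inductive expr (S : psr_ops) (Sigma : Type) : Type :=
| ETest (b : test Sigma)
| EWeight (u : car S).
Arguments ETest {S Sigma} b.
Arguments EWeight {S Sigma} u.

Definition esem {S : psr_ops} {Sigma : Type} (e : expr S Sigma) (s : Sigma) : car S :=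
  match e with
  | ETest b => tsem S b s
  | EWeight u => u
  end.

Inductive cmd (S : psr_ops) (Sigma A : Type) : Type :=
| Skip
| SeqC (C1 C2 : cmd S Sigma A)
| PlusC (C1 C2 : cmd S Sigma A)
| Assume (e : expr S Sigma)
| IterC (C : cmd S Sigma A) (e e' : expr S Sigma)
| Atom (a : A).
Arguments Skip {S Sigma A}. Arguments Atom {S Sigma A} a.
Arguments Assume {S Sigma A} e.

Definition While {S : psr_ops} {Sigma A : Type} (b : test Sigma) (C : cmd S Sigma A)
  : cmd S Sigma A :=
  IterC C (ETest b) (ETest (TNot b)).

Definition andT (S : psr_ops) {Sigma : Type} (P : Sigma -> Prop) (b : test Sigma)
  : Sigma -> Prop := fun s => P s /\ tsem S b s = pone S.
Definition andNotT (S : psr_ops) {Sigma : Type} (P : Sigma -> Prop) (b : test Sigma)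
  : Sigma -> Prop := fun s => P s /\ tsem S b s = pzero S.

Section Deriv.
Variables (S : psr_ops) (Sigma A : Type).
Notation As := (assertion S Sigma).
Notation Cm := (cmd S Sigma A).

Inductive derivable (Gamma : As -> A -> As -> Prop) : As -> Cm -> As -> Prop :=
| r_axiom : forall phi a psi, Gamma phi a psi -> derivable Gamma phi (Atom a) psi
| r_skip : forall phi, derivable Gamma phi Skip phi
| r_seq : forall phi th psi C1 C2,
    derivable Gamma phi C1 th -> derivable Gamma th C2 psi ->
    derivable Gamma phi (SeqC C1 C2) psi
| r_plus : forall phi psi1 psi2 C1 C2,
    derivable Gamma phi C1 psi1 -> derivable Gamma phi C2 psi2 ->
    derivable Gamma phi (PlusC C1 C2) (oplus psi1 psi2)
| r_assume : forall phi e u,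
    (forall m sg, phi m -> wf m sg <> pzero S -> esem e sg = u) ->
    derivable Gamma phi (Assume e) (smul_r phi u)
| r_iter : forall (phi psi : nat -> As) psiinf C e e',
    converges psi psiinf ->
    (forall n, derivable Gamma (phi n) (SeqC (Assume e) C) (phi (Datatypes.S n))) ->
    (forall n, derivable Gamma (phi n) (Assume e') (psi n)) ->
    derivable Gamma (phi 0) (IterC C e e') psiinf
| r_false : forall C phi, derivable Gamma (@AFalse S Sigma) C phi
| r_true : forall C phi, derivable Gamma phi C (@WAll S Sigma)
| r_scale : forall phi C psi u,
    derivable Gamma phi C psi -> derivable Gamma (smul_l u phi) C (smul_l u psi)
| r_disj : forall phi1 phi2 psi1 psi2 C,
    derivable Gamma phi1 C psi1 -> derivable Gamma phi2 C psi2 ->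
    derivable Gamma (unionA phi1 phi2) C (unionA psi1 psi2)
| r_conj : forall phi1 phi2 psi1 psi2 C,
    derivable Gamma phi1 C psi1 -> derivable Gamma phi2 C psi2 ->
    derivable Gamma (interA phi1 phi2) C (interA psi1 psi2)
| r_choice : forall (T : Type) (phi phi' : T -> As) C,
    (forall t, derivable Gamma (phi t) C (phi' t)) ->
    derivable Gamma (bigoplus phi) C (bigoplus phi')
| r_exists : forall (T : Type) (phi phi' : T -> As) C,
    (forall t, derivable Gamma (phi t) C (phi' t)) ->
    derivable Gamma (bigunion phi) C (bigunion phi')
| r_conseq : forall phi phi' psi psi' C,
    subA phi' phi -> derivable Gamma phi C psi -> subA psi psi' ->
    derivable Gamma phi' C psi'.
End Deriv.

(* Main.v *)
Require Import Defs.
From Stdlib Require Import List ClassicalEpsilon Classical ProofIrrelevance FunctionalExtensionality.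
Import ListNotations.
Set Implicit Arguments.

Lemma ple_refl S (HS : psr_axioms S) a : ple S a a.
Proof. exists (pzero S). rewrite (padd_comm HS). apply (padd_0l HS). Qed.

Lemma ple_0 S (HS : psr_axioms S) a : ple S (pzero S) a.
Proof. exists a. apply (padd_0l HS). Qed.

Lemma lub_unique S (HS : psr_axioms S) D s t : is_lub S D s -> is_lub S D t -> s = t.
Proof. intros [H1 H2] [H3 H4]. apply (ple_antisym HS); [apply H2; exact H3 | apply H4; exact H1]. Qed.

Lemma lub_two S (HS : psr_axioms S) (D : car S -> Prop) a :
  D (pzero S) -> (forall d, D d -> d = pzero S \/ d = a) -> (D a \/ a = pzero S) -> is_lub S D a.
Proof.
  intros H0 Hd Ha. split.
  - intros d Hd'. destruct (Hd d Hd') as [-> | ->]. apply ple_0; auto. apply ple_refl; auto.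
  - intros u Hu. destruct Ha as [Ha | ->]; auto.
Qed.

Lemma fsum_pt S (HS : psr_axioms S) (I : Type) (F : I -> car S) i0
  (HF : forall i, i <> i0 -> F i = pzero S) l :
  NoDup l -> (In i0 l -> fsum S F l = Some (F i0)) /\ (~ In i0 l -> fsum S F l = Some (pzero S)).
Proof.
  induction l as [|i l IH]; intros Hnd.
  - split; [intros [] | reflexivity].
  - inversion Hnd as [|? ? Hni Hnd']; subst.
    destruct (IH Hnd') as [IH1 IH2].
    destruct (classic (i = i0)) as [-> | Hne].
    + split; [|intros H; exfalso; apply H; left; reflexivity].
      intros _. simpl. rewrite (IH2 Hni). simpl. rewrite (padd_comm HS). apply (padd_0l HS).
    + assert (Hin : In i0 (i :: l) -> In i0 l).
      { simpl. intros [h|h]; [congruence|auto]. }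
      simpl. rewrite (HF i Hne).
      split; intros H.
      * rewrite (IH1 (Hin H)). simpl. apply (padd_0l HS).
      * rewrite IH2 by (intro; apply H; right; auto). simpl. apply (padd_0l HS).
Qed.

Lemma fsum_zero S (HS : psr_axioms S) (I : Type) (F : I -> car S)
  (HF : forall i, F i = pzero S) l : fsum S F l = Some (pzero S).
Proof.
  induction l as [|i l IH]; [reflexivity|].
  simpl. rewrite IH. simpl. rewrite HF. apply (padd_0l HS).
Qed.

Lemma is_sum_pt S (HS : psr_axioms S) (I : Type) (F : I -> car S) i0
  (HF : forall i, i <> i0 -> F i = pzero S) : is_sum S F (F i0).
Proof.
  split.
  - intros l Hnd. destruct (fsum_pt HS F HF Hnd) as [A1 A2].
    destruct (classic (In i0 l)) as [h|h]; [rewrite (A1 h) | rewrite (A2 h)]; discriminate.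
  - apply lub_two; auto.
    + exists []. split; [constructor | reflexivity].
    + intros d [l [Hnd Hl]]. destruct (fsum_pt HS F HF Hnd) as [A1 A2].
      destruct (classic (In i0 l)) as [h|h]; [right; rewrite (A1 h) in Hl | left; rewrite (A2 h) in Hl];
        congruence.
    + left. exists [i0]. split. constructor; [intros [] | constructor].
      simpl. rewrite (padd_comm HS). apply (padd_0l HS).
Qed.

Lemma is_sum_zero S (HS : psr_axioms S) (I : Type) (F : I -> car S)
  (HF : forall i, F i = pzero S) : is_sum S F (pzero S).
Proof.
  split.
  - intros l _. rewrite (fsum_zero HS F HF). discriminate.
  - apply lub_two; auto.
    + exists []. split; [constructor | reflexivity].
    + intros d [l [_ Hl]]. rewrite (fsum_zero HS F HF) in Hl. left; congruence.
Qed.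

Lemma is_sum_zero_uniq S (HS : psr_axioms S) (I : Type) (F : I -> car S) s :
  is_sum S F s -> (forall i, F i = pzero S) -> s = pzero S.
Proof.
  intros [_ H] HF. exact (lub_unique HS H (proj2 (is_sum_zero HS F HF))).
Qed.

Lemma isW_pt S (HS : psr_axioms S) Sigma (g : Sigma -> car S) sg
  (Hg : forall s, s <> sg -> g s = pzero S) : isW S g /\ mass_is S g (g sg).
Proof.
  assert (Hx : forall x : supp_t S g, proj1_sig x = sg).
  { intros [x hx]. simpl. apply NNPP; intro; apply hx; apply Hg; auto. }
  assert (Hall : forall x y : supp_t S g, x = y).
  { intros x y. pose proof (Hx x) as ex. pose proof (Hx y) as ey.
    destruct x as [x hx]; destruct y as [y hy]; simpl in *. subst.
    f_equal. apply proof_irrelevance. }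
  assert (Hm : mass_is S g (g sg)).
  { unfold mass_is. destruct (classic (g sg = pzero S)) as [h|h].
    - rewrite h. apply is_sum_zero; auto. intros x. exfalso.
      destruct x as [x hx]. pose proof (Hx (exist _ x hx)) as e. simpl in e. subst. contradiction.
    - pose (x0 := exist (fun s => g s <> pzero S) sg h : supp_t S g).
      change (g sg) with ((fun x : supp_t S g => g (proj1_sig x)) x0).
      apply is_sum_pt; auto; intros i hi; exfalso; apply hi; apply Hall. }
  split; [split | exact Hm].
  - exists (fun _ => 0). intros; apply Hall.
  - exists (g sg); exact Hm.
Qed.

Definition ptW S (HS : psr_axioms S) Sigma (g : Sigma -> car S) sg
  (Hg : forall s, s <> sg -> g s = pzero S) : W S Sigma :=
  exist _ g (proj1 (isW_pt HS g Hg)).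

Definition eta S Sigma (sg : Sigma) : Sigma -> car S :=
  fun s => if excluded_middle_informative (s = sg) then pone S else pzero S.

Lemma eta_cond S Sigma (sg : Sigma) : forall s, s <> sg -> eta S sg s = pzero S.
Proof. intros s h. unfold eta. destruct (excluded_middle_informative (s = sg)); [contradiction|reflexivity]. Qed.
Arguments eta_cond S [Sigma] sg s _.

Definition ZA S Sigma : assertion S Sigma := fun w => forall s, wf w s = pzero S.

Lemma derive_Z S (HS : psr_axioms S) Sigma A (Gamma : assertion S Sigma -> A -> assertion S Sigma -> Prop) (D : cmd S Sigma A) :
  derivable Gamma (@ZA S Sigma) D (@ZA S Sigma).
Proof.
  apply r_conseq with (phi := bigoplus (fun _ : Empty_set => @WAll S Sigma))
                      (psi := bigoplus (fun _ : Empty_set => @WAll S Sigma)).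
  - intros m Hm. exists (fun e : Empty_set => match e with end). split; [intros []|].
    intros sg. rewrite (Hm sg). apply is_sum_zero; auto; intros [].
  - apply r_choice. intros [].
  - intros m [f [_ Hf]] s. apply (is_sum_zero_uniq HS (Hf s)). intros [].
Qed.

Lemma box_sum S (HS : psr_axioms S) Sigma T (f : T -> W S Sigma) s Q :
  (forall t, @BoxA S Sigma Q (f t)) -> wsum f s -> @BoxA S Sigma Q s.
Proof.
  intros Hf Hs sg Hne. apply NNPP; intro HQ. apply Hne.
  apply (is_sum_zero_uniq HS (Hs sg)). intros t. apply NNPP; intro h. apply HQ. apply (Hf t sg h).
Qed.

Lemma decomp S (HS : psr_axioms S) Sigma A (Gamma : assertion S Sigma -> A -> assertion S Sigma -> Prop) (P Q : Sigma -> Prop) (D : cmd S Sigma A) :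
  (forall sg, P sg -> derivable Gamma (@OneA S Sigma (fun s => s = sg)) D (@BoxA S Sigma Q)) ->
  derivable Gamma (@BoxA S Sigma P) D (@BoxA S Sigma Q).
Proof.
  intros H.
  pose (phi := fun (t : {m : W S Sigma | @BoxA S Sigma P m}) =>
    bigoplus (fun sg : Sigma => if excluded_middle_informative (P sg)
       then smul_l (wf (proj1_sig t) sg) (@OneA S Sigma (fun s => s = sg)) else @ZA S Sigma)).
  apply r_conseq with (phi := bigunion phi)
    (psi := bigunion (fun t : {m : W S Sigma | @BoxA S Sigma P m} =>
               bigoplus (fun sg : Sigma => @BoxA S Sigma Q))).
  - intros m Hm. exists (exist _ m Hm). unfold phi; simpl.
    assert (Hg : forall sg s, s <> sg -> pmul S (wf m sg) (eta S sg s) = pzero S).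
    { intros sg s h. rewrite (eta_cond S sg s h). apply (pmul_0r HS). }
    exists (fun sg => ptW HS _ (Hg sg)). split.
    + intros sg. cbv beta. destruct (excluded_middle_informative (P sg)) as [hp|hp].
      * exists (ptW HS (eta S sg) (eta_cond S sg)). split.
        -- split.
           ++ simpl. pose proof (proj2 (isW_pt HS (eta S sg) (eta_cond S sg))) as Hm'.
              unfold eta at 2 in Hm'.
              destruct (excluded_middle_informative (sg = sg)); [exact Hm'|congruence].
           ++ intros s hs. simpl in hs. apply NNPP; intro hn. apply hs. apply eta_cond; auto.
        -- intros s; reflexivity.
      * intros s. simpl. destruct (classic (s = sg)) as [-> | hn].
        -- assert (E : wf m sg = pzero S).
           { apply NNPP; intro h. apply hp. apply (Hm sg h). }
           rewrite E. apply (pmul_0l HS).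
        -- apply Hg; auto.
    + intros s. simpl.
      set (F := fun sg => pmul S (wf m sg) (eta S sg s)).
      replace (wf m s) with (F s).
      * apply is_sum_pt; auto. intros i hi. unfold F. apply Hg. auto.
      * unfold F, eta. destruct (excluded_middle_informative (s = s)); [apply (pmul_1r HS)|congruence].
  - apply r_exists. intros t. apply r_choice. intros sg.
    destruct (excluded_middle_informative (P sg)) as [hp|hp].
    + eapply r_conseq; [intros m hm; exact hm | apply r_scale, H, hp | ].
      intros w [m [hm hw]] s hs. apply (hm s). intro h0; apply hs; rewrite hw, h0; apply (pmul_0r HS).
    + eapply r_conseq; [intros m hm; exact hm | apply derive_Z; auto |].
      intros w hw s hs; exfalso; apply hs, hw.
  - intros w [t Ht]. destruct Ht as [f [Hf Hw]]. eapply box_sum; eauto.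
Qed.

Theorem lemmaE11 (S : psr_ops) (HS : psr_axioms S) (Sigma A : Type)
  (Gamma : assertion S Sigma -> A -> assertion S Sigma -> Prop)
  (b : test Sigma) (C : cmd S Sigma A) (P : Sigma -> Prop) :
  derivable Gamma (@OneA S Sigma (andT S P b)) C (@BoxA S Sigma P) ->
  derivable Gamma (@OneA S Sigma P) (While b C) (@BoxA S Sigma (andNotT S P b)).
Proof.
  intros HC. unfold While.
  apply r_conseq with (phi := @BoxA S Sigma P) (psi := @BoxA S Sigma (andNotT S P b)).
  - intros m [_ Hm]. exact Hm.
  - change (@BoxA S Sigma P) with ((fun _ : nat => @BoxA S Sigma P) 0).
    apply r_iter with (psi := fun _ => @BoxA S Sigma (andNotT S P b)).
    + intros m s Hm Hs. eapply box_sum; eauto.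
    + intros n. apply decomp; auto. intros sg hp.
      eapply r_seq.
      * apply r_assume with (u := tsem S b sg). intros m s [_ Hsupp] hs.
        rewrite (Hsupp s hs). reflexivity.
      * unfold tsem. destruct (excluded_middle_informative (tholds b sg)) as [hb|hb].
        -- eapply r_conseq; [| exact HC | intros m h; exact h].
           intros w [m [[Hmass Hsupp] Hw]].
           assert (E : wf w = wf m).
           { apply functional_extensionality; intro s; rewrite Hw; apply (pmul_1r HS). }
           split.
           ++ rewrite E; exact Hmass.
           ++ intros s hs. rewrite E in hs. rewrite (Hsupp s hs). split; auto.
              unfold tsem. destruct (excluded_middle_informative (tholds b sg)); [reflexivity|contradiction].
        -- eapply r_conseq; [| apply derive_Z; auto | ].
           ++ intros w [m [_ Hw]] s. rewrite Hw; apply (pmul_0r HS).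
           ++ intros w hw s hs; exfalso; apply hs, hw.
    + intros n. apply decomp; auto. intros sg hp.
      eapply r_conseq; [intros m h; exact h | apply r_assume with (u := tsem S (TNot b) sg) |].
      * intros m s [_ Hsupp] hs. rewrite (Hsupp s hs). reflexivity.
      * intros w [m [[_ Hsupp] Hw]] s hs. rewrite Hw in hs.
        assert (hm : wf m s <> pzero S) by (intro h; apply hs; rewrite h; apply (pmul_0l HS)).
        pose proof (Hsupp s hm); subst s.
        unfold tsem in hs.
        destruct (excluded_middle_informative (tholds (TNot b) sg)) as [hn|hn].
        -- split; auto. unfold tsem.
           destruct (excluded_middle_informative (tholds b sg)); [contradiction|reflexivity].
        -- exfalso; apply hs; apply (pmul_0r HS).
  - intros m h; exact h.
Qed.
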